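(* Let $\mathcal{B}$ be a Borel-measurable partition of $\Omega$ with $\underline{P}(B)>0$ for all $B\in\mathcal{B}$, and let $A\in\mathscr{B}(\Omega)$. Suppose that one of the two rules (Dempster's rule, the Geometric rule) satisfies $\inf_{B\in\mathcal{B}}\underline{P}_\bullet(A\mid B)>\overline{P}(A)$ and the other satisfies $\sup_{B\in\mathcal{B}}\overline{P}_\bullet(A\mid B)<\underline{P}(A)$. Then $\mathcal{B}$ strictly dilates $A$ under the generalized Bayes rule, i.e. $\sup_{B\in\mathcal{B}}\underline{P}_{\mathfrak{B}}(A\mid B)<\underline{P}(A)\le\overline{P}(A)<\inf_{B\in\mathcal{B}}\overline{P}_{\mathfrak{B}}(A\mid B)$.
   Context: $\Omega$ is a separable, completely metrizable space with Borel $\sigma$-algebra $\mathscr{B}(\Omega)$; $\underline{P}$ is a Choquet capacity of order 2 on $\mathscr{B}(\Omega)$ (a coherent lower probability with weakly compact set of dominating measures satisfying $\underline{P}(A\cup B)\ge\underline{P}(A)+\underline{P}(B)-\underline{P}(A\cap B)$); $\Pi=\{P:P\ge\underline{P}\}$, $\underline{P}(A)=\inf_{P\in\Pi}P(A)$, $\overline{P}(A)=\sup_{P\in\Pi}P(A)=1-\underline{P}(A^c)$. Generalized Bayes rule: $\underline{P}_{\mathfrak{B}}(A\mid B)=\inf_{P\in\Pi}P(A\cap B)/P(B)$, $\overline{P}_{\mathfrak{B}}(A\mid B)=\sup_{P\in\Pi}P(A\cap B)/P(B)$. Dempster's rule: $\overline{P}_{\mathfrak{D}}(A\mid B)=\overline{P}(A\cap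 B)/\overline{P}(B)$, $\underline{P}_{\mathfrak{D}}(A\mid B)=1-\overline{P}_{\mathfrak{D}}(A^c\mid B)$. Geometric rule: $\underline{P}_{\mathfrak{G}}(A\mid B)=\underline{P}(A\cap B)/\underline{P}(B)$, $\overline{P}_{\mathfrak{G}}(A\mid B)=1-\underline{P}_{\mathfrak{G}}(A^c\mid B)$. In the paper's terminology, the first hypothesis is ''$\mathcal{B}$ incurs sure loss in $A$'' and the second ''sure gain''. *)

(* Defs.v *)
From HB Require Import structures.
From mathcomp Require Import all_boot all_order all_algebra.
From mathcomp Require Import all_classical all_reals all_analysis.
Set Implicit Arguments. Unset Strict Implicit. Unset Printing Implicit Defensive.
Import Order.TTheory GRing.Theory Num.Theory.
Import numFieldNormedType.Exports.
Local Open Scope classical_set_scope.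
Local Open Scope ring_scope.

Section Defs.
Variable R : realType.

Definition separable_space (T : topologicalType) : Prop :=
  exists D : set T, countable D /\ closure D = setT.

Definition completely_metrizable (T : topologicalType) : Prop :=
  exists d : T -> T -> R,
    [/\ (forall x y, 0 <= d x y),
        (forall x y, d x y = 0 <-> x = y),
        (forall x y, d x y = d y x) /\
        (forall x y z, d x z <= d x y + d y z),
        (forall U : set T, open U <->
            (forall x, U x -> exists2 e : R, 0 < e & [set y | d x y < e] `<=` U))
      & (forall u : nat -> T,
            (forall e : R, 0 < e -> exists N, forall m n, (N <= m)%N -> (N <= n)%N ->
               d (u m) (u n) < e) ->
            exists x, (fun n => d x (u n)) @ \oo --> (0 : R))].

Definition Borel (T : ptopologicalType) := g_sigma_algebraType (@open T).

Variable T : ptopologicalType.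
Local Notation Om := (Borel T).

Definition core (Plow : set Om -> R) : set (probability Om R) :=
  [set P | forall A : set Om, measurable A -> ((Plow A)%:E <= P A)%E].

Definition upper (Plow : set Om -> R) (A : set Om) : R := 1 - Plow (~` A).

(* weak compactness of a set of probability measures (weak topology induced
   by integrals of bounded continuous functions), via ultrafilters *)
Definition weakly_compact (S : set (probability Om R)) : Prop :=
  forall U : set_system (probability Om R), UltraFilter U -> U S ->
    exists2 P, S P &
      forall f : T -> R, continuous f -> (exists M : R, forall x, `|f x| <= M) ->
        (fun Q : probability Om R => (\int[Q]_x (f x)%:E)%E) @ U
          --> (\int[P]_x (f x)%:E)%E.

Definition choquet2 (Plow : set Om -> R) : Prop :=
  [/\ (forall A : set Om, measurable A ->
         (Plow A)%:E = ereal_inf [set P A | P in core Plow]),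
      weakly_compact (core Plow)
    & (forall A B : set Om, measurable A -> measurable B ->
         Plow A + Plow B - Plow (A `&` B) <= Plow (A `|` B))].

Definition lowerBayes (Plow : set Om -> R) (A B : set Om) : \bar R :=
  ereal_inf [set (fine (P (A `&` B)) / fine (P B))%:E | P in core Plow].
Definition upperBayes (Plow : set Om -> R) (A B : set Om) : \bar R :=
  ereal_sup [set (fine (P (A `&` B)) / fine (P B))%:E | P in core Plow].

Definition upperDempster (Plow : set Om -> R) (A B : set Om) : R :=
  upper Plow (A `&` B) / upper Plow B.
Definition lowerDempster (Plow : set Om -> R) (A B : set Om) : R :=
  1 - upperDempster Plow (~` A) B.

Definition lowerGeometric (Plow : set Om -> R) (A B : set Om) : R :=
  Plow (A `&` B) / Plow B.
Definition upperGeometric (Plow : set Om -> R) (A B : set Om) : R :=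
  1 - lowerGeometric Plow (~` A) B.

Definition measurable_partition (Bs : set (set Om)) : Prop :=
  [/\ (forall B, Bs B -> measurable B),
      (forall B C, Bs B -> Bs C -> B <> C -> B `&` C = set0)
    & \bigcup_(B in Bs) B = setT].

End Defs.

(* Main.v *)
Require Import Defs.
From HB Require Import structures.
From mathcomp Require Import all_boot all_order all_algebra.
From mathcomp Require Import all_classical all_reals all_analysis.
From mathcomp Require Import ring lra.
Set Implicit Arguments. Unset Strict Implicit. Unset Printing Implicit Defensive.
Import Order.TTheory GRing.Theory Num.Theory.
Local Open Scope classical_set_scope.
Local Open Scope ring_scope.

Definition pr (R : realType) (T : ptopologicalType) (P : probability (Borel T) R)
  (X : set (Borel T)) : R := fine (P X).

Lemma prE (R : realType) (T : ptopologicalType) (P : probability (Borel T) R)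
  (X : set (Borel T)) : measurable X -> (pr P X)%:E = P X.
Proof. by move=> mX; rewrite /pr fineK // fin_num_measure. Qed.

Lemma prC (R : realType) (T : ptopologicalType) (P : probability (Borel T) R)
  (X : set (Borel T)) : measurable X -> pr P (~` X) = 1 - pr P X.
Proof. by move=> mX; rewrite /pr probability_setC // -(prE P mX) -EFinB. Qed.

Lemma pr01 (R : realType) (T : ptopologicalType) (P : probability (Borel T) R)
  (X : set (Borel T)) : measurable X -> 0 <= pr P X /\ pr P X <= 1.
Proof.
move=> mX; split; rewrite -lee_fin prE //. 

exact: probability_le1.
Qed.

Lemma prU (R : realType) (T : ptopologicalType) (P : probability (Borel T) R)
  (X B : set (Borel T)) : measurable X -> measurable B ->
  pr P (X `&` B) + pr P (~` X `&` B) = pr P B.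
Proof.
move=> mX mB; apply: EFin_inj.
have m1 : measurable (X `&` B) by exact: measurableI.
have m2 : measurable (~` X `&` B) by apply: measurableI => //; exact: measurableC.
rewrite EFinD (prE P m1) (prE P m2) (prE P mB).
rewrite -measureU //; last by apply/seteqP; split => x //= [[? ?] [? ?]].
congr (P _).
by rewrite -setIUl setUv setTI.
Qed.

Lemma core_ge (R : realType) (T : ptopologicalType) (Plow : set (Borel T) -> R)
  (P : probability (Borel T) R) (X : set (Borel T)) :
  core Plow P -> measurable X -> Plow X <= pr P X.
Proof. by move=> cP mX; rewrite -lee_fin prE //; exact: cP. Qed.

Lemma core_approx (R : realType) (T : ptopologicalType) (Plow : set (Borel T) -> R)
  (X : set (Borel T)) (e : R) : choquet2 Plow -> measurable X -> 0 < e ->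
  exists P, core Plow P /\ pr P X < Plow X + e.
Proof.
case=> hinf _ _ mX e0.
have fin : ereal_inf [set P X | P in core Plow] \is a fin_num by rewrite -hinf.
have [x [P cP <-] lt] := lb_ereal_inf_adherent e0 fin.
exists P; split => //; rewrite -lte_fin prE // EFinD hinf //.
Qed.

Lemma core_le_upper (R : realType) (T : ptopologicalType) (Plow : set (Borel T) -> R)
  (P : probability (Borel T) R) (X : set (Borel T)) :
  core Plow P -> measurable X -> pr P X <= upper Plow X.
Proof.
move=> cP mX; rewrite /upper.
have := core_ge cP (measurableC mX); rewrite prC //; lra.
Qed.

Lemma upper_approx (R : realType) (T : ptopologicalType) (Plow : set (Borel T) -> R)
  (X : set (Borel T)) (e : R) : choquet2 Plow -> measurable X -> 0 < e ->
  exists P, core Plow P /\ upper Plow X - e < pr P X.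
Proof.
move=> hc mX e0; have [P [cP h]] := core_approx hc (measurableC mX) e0.
exists P; split => //; move: h; rewrite prC // /upper; lra.
Qed.

Lemma lowerBayes_le (R : realType) (T : ptopologicalType) (Plow : set (Borel T) -> R)
  (A B : set (Borel T)) (c : R) :
  (exists P, core Plow P /\ pr P (A `&` B) / pr P B <= c) ->
  (lowerBayes Plow A B <= c%:E)%E.
Proof.
case=> P [cP h]; apply: le_trans (ereal_inf_lbound _) _; first by exists P.
by rewrite lee_fin.
Qed.

Lemma upperBayes_ge (R : realType) (T : ptopologicalType) (Plow : set (Borel T) -> R)
  (A B : set (Borel T)) (c : R) :
  (exists P, core Plow P /\ c <= pr P (A `&` B) / pr P B) ->
  (c%:E <= upperBayes Plow A B)%E.
Proof.
case=> P [cP h]; apply: le_trans _ (ereal_sup_ubound _); last by exists P.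
by rewrite lee_fin.
Qed.

Lemma c1p1 (R : realType) (T : ptopologicalType) (Plow : set (Borel T) -> R)
  (A B : set (Borel T)) (s0 c : R) : choquet2 Plow -> measurable A -> measurable B ->
  0 < Plow B -> s0 < c -> c < 1 -> upperGeometric Plow A B <= s0 ->
  exists P, core Plow P /\ pr P (A `&` B) / pr P B <= c.
Proof.
move=> hc mA mB b0 sc c1; rewrite /upperGeometric /lowerGeometric => h.
have hq : (1 - s0) * Plow B <= Plow (~` A `&` B).
  by rewrite -ler_pdivlMr //; lra.
pose k := (1 - s0) / (1 - c).
have hk : k * (1 - c) = 1 - s0 by rewrite /k; field; lra.
have k1 : 1 < k by nra.
have e0 : 0 < (k - 1) * Plow B by nra.
have [P [cP hP]] := core_approx hc mB e0.
exists P; split => //.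
have pB0 : 0 < pr P B by have := core_ge cP mB; lra.
rewrite ler_pdivrMr //.
have := prU P mA mB.
have := core_ge cP (measurableI _ _ (measurableC mA) mB).
nra.
Qed.

Lemma c1p3 (R : realType) (T : ptopologicalType) (Plow : set (Borel T) -> R)
  (A B : set (Borel T)) (t0 c : R) : choquet2 Plow -> measurable A -> measurable B ->
  0 < Plow B -> c < t0 -> t0 <= lowerDempster Plow A B ->
  exists P, core Plow P /\ c <= pr P (A `&` B) / pr P B.
Proof.
move=> hc mA mB b0 ct; rewrite /lowerDempster /upperDempster => h.
have mCB : measurable (~` A `&` B) by apply: measurableI => //; exact: measurableC.
have [P0 [cP0 _]] := core_approx hc mB ltr01.
have UB0 : 0 < upper Plow B.
  by have := core_le_upper cP0 mB; have := core_ge cP0 mB; lra.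
have U10 : 0 <= upper Plow (~` A `&` B).
  by have := core_le_upper cP0 mCB; have := pr01 P0 mCB; lra.
have hq : upper Plow (~` A `&` B) <= (1 - t0) * upper Plow B.
  by rewrite -ler_pdivrMr //; lra.
have t1 : t0 <= 1 by nra.
pose k := (1 - t0) / (1 - c).
have hk : k * (1 - c) = 1 - t0 by rewrite /k; field; lra.
have k1 : k < 1 by nra.
have e0 : 0 < (1 - k) * upper Plow B by nra.
have [P [cP hP]] := upper_approx hc mB e0.
exists P; split => //.
have pB0 : 0 < pr P B by have := core_ge cP mB; lra.
rewrite ler_pdivlMr //.
have := prU P mA mB.
have := core_le_upper cP mCB.
nra.
Qed.

Lemma c2p1 (R : realType) (T : ptopologicalType) (Plow : set (Borel T) -> R)
  (A B : set (Borel T)) (s0 c : R) : choquet2 Plow -> measurable A -> measurable B ->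
  0 < Plow B -> s0 < c -> upperDempster Plow A B <= s0 ->
  exists P, core Plow P /\ pr P (A `&` B) / pr P B <= c.
Proof.
move=> hc mA mB b0 sc; rewrite /upperDempster => h.
have mAB : measurable (A `&` B) by apply: measurableI.
have [P0 [cP0 _]] := core_approx hc mB ltr01.
have UB0 : 0 < upper Plow B.
  by have := core_le_upper cP0 mB; have := core_ge cP0 mB; lra.
have U10 : 0 <= upper Plow (A `&` B).
  by have := core_le_upper cP0 mAB; have := pr01 P0 mAB; lra.
have hq : upper Plow (A `&` B) <= s0 * upper Plow B.
  by rewrite -ler_pdivrMr //; lra.
have s00 : 0 <= s0 by nra.
pose k := s0 / c.
have hk : k * c = s0 by rewrite /k; field; lra.
have k1 : k < 1 by nra.
have e0 : 0 < (1 - k) * upper Plow B by nra.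
have [P [cP hP]] := upper_approx hc mB e0.
exists P; split => //.
have pB0 : 0 < pr P B by have := core_ge cP mB; lra.
rewrite ler_pdivrMr //.
have := core_le_upper cP mAB.
nra.
Qed.

Lemma c2p3 (R : realType) (T : ptopologicalType) (Plow : set (Borel T) -> R)
  (A B : set (Borel T)) (t0 c : R) : choquet2 Plow -> measurable A -> measurable B ->
  0 < Plow B -> 0 < c -> c < t0 -> t0 <= lowerGeometric Plow A B ->
  exists P, core Plow P /\ c <= pr P (A `&` B) / pr P B.
Proof.
move=> hc mA mB b0 c0 ct; rewrite /lowerGeometric => h.
have mAB : measurable (A `&` B) by apply: measurableI.
have hq : t0 * Plow B <= Plow (A `&` B).
  by rewrite -ler_pdivlMr //; lra.
pose k := t0 / c.
have hk : k * c = t0 by rewrite /k; field; lra.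
have k1 : 1 < k by nra.
have e0 : 0 < (k - 1) * Plow B by nra.
have [P [cP hP]] := core_approx hc mB e0.
exists P; split => //.
have pB0 : 0 < pr P B by have := core_ge cP mB; lra.
rewrite ler_pdivlMr //.
have := core_ge cP mAB.
nra.
Qed.

Lemma sup_bound (R : realType) (I : Type) (Bs : set I) (f : I -> R) (y : R) :
  (exists B, Bs B) -> (ereal_sup [set (f B)%:E | B in Bs] < y%:E)%E ->
  exists s0, s0 < y /\ forall B, Bs B -> f B <= s0.
Proof.
case=> B0 hB0.
have ub : forall B, Bs B -> ((f B)%:E <= ereal_sup [set (f B)%:E | B in Bs])%E.
  by move=> B hB; apply: ereal_sup_ubound; exists B.
case: (ereal_sup _) ub => [r| |] ub.
- by rewrite lte_fin => h; exists r; split => // B hB; rewrite -lee_fin ub.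
- by [].
- by have := ub _ hB0.
Qed.

Lemma inf_bound (R : realType) (I : Type) (Bs : set I) (f : I -> R) (y : R) :
  (exists B, Bs B) -> (y%:E < ereal_inf [set (f B)%:E | B in Bs])%E ->
  exists t0, y < t0 /\ forall B, Bs B -> t0 <= f B.
Proof.
case=> B0 hB0.
have lb : forall B, Bs B -> (ereal_inf [set (f B)%:E | B in Bs] <= (f B)%:E)%E.
  by move=> B hB; apply: ereal_inf_lbound; exists B.
case: (ereal_inf _) lb => [r| |] lb.
- by rewrite lte_fin => h; exists r; split => // B hB; rewrite -lee_fin lb.
- by have := lb _ hB0.
- by [].
Qed.

Lemma sup_concl (R : realType) (I : Type) (Bs : set I) (g : I -> \bar R) (c y : R) :
  c < y -> (forall B, Bs B -> (g B <= c%:E)%E) ->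
  (ereal_sup [set g B | B in Bs] < y%:E)%E.
Proof.
move=> cy h; apply: (@le_lt_trans _ _ c%:E); last by rewrite lte_fin.
by apply: ge_ereal_sup => _ [B hB <-]; exact: h.
Qed.

Lemma inf_concl (R : realType) (I : Type) (Bs : set I) (g : I -> \bar R) (c y : R) :
  y < c -> (forall B, Bs B -> (c%:E <= g B)%E) ->
  (y%:E < ereal_inf [set g B | B in Bs])%E.
Proof.
move=> cy h; apply: (@lt_le_trans _ _ c%:E); first by rewrite lte_fin.
by apply: le_ereal_inf_tmp => _ [B hB <-]; exact: h.
Qed.

Unset Implicit Arguments.

Theorem corollary5p5 (R : realType) (T : ptopologicalType)
  (Plow : set (Borel T) -> R) (Bs : set (set (Borel T))) (A : set (Borel T)) :
  separable_space T -> completely_metrizable R T ->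
  choquet2 Plow ->
  measurable_partition Bs ->
  (forall B, Bs B -> 0 < Plow B) ->
  measurable A ->
  ((ereal_inf [set (lowerDempster Plow A B)%:E | B in Bs] > (upper Plow A)%:E /\
    ereal_sup [set (upperGeometric Plow A B)%:E | B in Bs] < (Plow A)%:E) \/
   (ereal_inf [set (lowerGeometric Plow A B)%:E | B in Bs] > (upper Plow A)%:E /\
    ereal_sup [set (upperDempster Plow A B)%:E | B in Bs] < (Plow A)%:E))%E ->
  (ereal_sup [set lowerBayes Plow A B | B in Bs] < (Plow A)%:E /\
   (Plow A <= upper Plow A)%R /\
   (upper Plow A)%:E < ereal_inf [set upperBayes Plow A B | B in Bs])%E.
Proof.
move=> _ _ hc [mBs _ cov] pos mA hyp.
have ne : exists B, Bs B.
  have : [set: Borel T] (point : T) by [].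
  by rewrite -cov => -[B hB _]; exists B.
have [P0 [cP0 _]] := core_approx hc mA ltr01.
have lA1 : Plow A <= 1 by have := core_ge cP0 mA; have := pr01 P0 mA; lra.
have uA0 : 0 <= upper Plow A by have := core_le_upper cP0 mA; have := pr01 P0 mA; lra.
have p2 : Plow A <= upper Plow A.
  by have := core_le_upper cP0 mA; have := core_ge cP0 mA; lra.
split; last split => //.
- case: hyp => -[_ hs].
  + have [s0 [s0A hs0]] := sup_bound ne hs.
    apply: (@sup_concl _ _ _ _ ((s0 + Plow A) / 2)); first lra.
    move=> B hB; apply: lowerBayes_le.
    apply: (c1p1 hc mA (mBs _ hB) (pos _ hB) (_ : s0 < _) _ (hs0 _ hB)); lra.
  + have [s0 [s0A hs0]] := sup_bound ne hs.
    apply: (@sup_concl _ _ _ _ ((s0 + Plow A) / 2)); first lra.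
    move=> B hB; apply: lowerBayes_le.
    apply: (c2p1 hc mA (mBs _ hB) (pos _ hB) (_ : s0 < _) (hs0 _ hB)); lra.
- case: hyp => -[hi _].
  + have [t0 [t0A ht0]] := inf_bound ne hi.
    apply: (@inf_concl _ _ _ _ ((t0 + upper Plow A) / 2)); first lra.
    move=> B hB; apply: upperBayes_ge.
    apply: (c1p3 hc mA (mBs _ hB) (pos _ hB) (_ : _ < t0) (ht0 _ hB)); lra.
  + have [t0 [t0A ht0]] := inf_bound ne hi.
    apply: (@inf_concl _ _ _ _ ((t0 + upper Plow A) / 2)); first lra.
    move=> B hB; apply: upperBayes_ge.
    apply: (c2p3 hc mA (mBs _ hB) (pos _ hB) (_ : 0 < _) (_ : _ < t0) (ht0 _ hB)); lra.
Qed.
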